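(* Let $\{\mathbf{y}(k)\}_{k\in\mathbb{Z}_+}$ be generated by the distributed quantized average consensus and weight-balancing algorithm described in the context on a strongly connected digraph, under the stated step-size and range conditions. Then for each $i\in\mathcal{V}$ there exist $y_{i,\min},y_{i,\max}\in\mathbb{R}$ such that $y_{i,\min}\le y_i(k)\le y_{i,\max}$ for all $k\in\mathbb{Z}_+$.
   Context: $\mathcal{G}=(\mathcal{V},\mathcal{E})$, $\mathcal{V}=\{1,\dots,N\}$, no self-loops, strongly connected; $\mathcal{N}_i^-=\{j:(j,i)\in\mathcal{E}\}$, $\mathcal{N}_i^+=\{j:(i,j)\in\mathcal{E}\}$, $d_i^+=|\mathcal{N}_i^+|$. Algorithm: given $q_{\min}<q_{\max}$ and initial values $y_i(0)$ with $\bar y(0)=\frac1N\sum_i y_i(0)\in[q_{\min},q_{\max}]$; $a_{ij}(0)=1$ if $j\in\mathcal{N}_i^-$, else $0$. $\gamma(k)=2^{-n}$ for $2^n-1\le k\le 2^{n+1}-2$; $\alpha(k)>0$ nonincreasing with $\sum\alpha(k)=\infty$, $\sum\alpha(k)^2<\infty$. At step $k$: $b_i(k)=\sum_{j\in\mathcal{N}_i^-}a_{ij}(k)-\sum_{j\in\mathcal{N}_i^+}a_{ji}(k)$; $n_i(k)=\mathcal{I}\{b_i(k)\ge d_i^+\gamma(k)\}$; $\tilde y_i(k)=\min\{\max\{y_i(k),q_{\min}\},q_{\max}\}$; $x_i(k)=q_{\max}$ with probability $p_i(k)=\frac{\tilde y_i(k)-q_{\min}}{q_{\max}-q_{\min}}$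 and $q_{\min}$ otherwise; $a_{ij}(k+1)=a_{ij}(k)+n_j(k)\gamma(k)$ for $j\in\mathcal{N}_i^-$; $y_i(k+1)=y_i(k)+\alpha(k)\sum_{j\in\mathcal{N}_i^-}a_{ij}(k)(x_j(k)-x_i(k))+\alpha(k)b_i(k)x_i(k)$. *)

(* Defs.v *)
From HB Require Import structures.
From mathcomp Require Import all_boot all_order all_algebra.
From mathcomp Require Import all_classical all_reals all_analysis.
Set Implicit Arguments. Unset Strict Implicit. Unset Printing Implicit Defensive.
Import Order.TTheory GRing.Theory Num.Theory.
Local Open Scope ring_scope.

Section Algo.
Variables (R : realType) (N : nat) (E : rel 'I_N).
(* (j,i) \in E  is written  E j i.  In-neighbours of i: j with E j i;
   out-neighbours of i: j with E i j. *)

Definition outdeg (i : 'I_N) : nat := #|[pred j | E i j]|.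

Definition imbalance (a : 'I_N -> 'I_N -> R) (i : 'I_N) : R :=
  \sum_(j | E j i) a i j - \sum_(j | E i j) a j i.

Definition nflag (a : 'I_N -> 'I_N -> R) (g : R) (i : 'I_N) : bool :=
  (outdeg i)%:R * g <= imbalance a i.

Definition sat (qmin qmax y : R) : R := Num.min (Num.max y qmin) qmax.

(* probability p_i(k) that x_i(k) = qmax *)
Definition prob_max (qmin qmax y : R) : R :=
  (sat qmin qmax y - qmin) / (qmax - qmin).

End Algo.

(* Main.v *)
Require Import Defs.
From HB Require Import structures.
From mathcomp Require Import all_boot all_order all_algebra.
From mathcomp Require Import all_classical all_reals all_analysis.
From mathcomp Require Import zify ring lra.
Import Order.TTheory GRing.Theory Num.Theory.
Import numFieldNormedType.Exports.
Local Open Scope classical_set_scope.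
Local Open Scope ring_scope.

Lemma eventually_not (P : nat -> bool) (B : nat) :
  (forall M, (\sum_(0 <= n < M) P n <= B)%N) ->
  exists n0, forall n, (n0 <= n)%N -> ~~ P n.
Proof.
elim: B P => [|B IH] P hP.
  exists 0%N => n _; apply/negP => hn; have := hP n.+1.
  by rewrite big_nat_recr //= hn addn1.
case: (pselect (exists n1, P n1)) => [[n1 hn1]|hno]; last first.
  by exists 0%N => n _; apply/negP => hn; apply: hno; exists n.
have hP' : forall M, (\sum_(0 <= n < M) P (n + n1.+1)%N <= B)%N.
  move=> M; have := hP (n1.+1 + M)%N.
  rewrite (big_cat_nat (n := n1.+1)) //=; last by lia.
  rewrite [X in (_ + X)%N](_ : _ = (\sum_(0 <= n < M) P (n + n1.+1))%N); last first.
    by rewrite -{1}(add0n n1.+1) big_addn -addnC addnK.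
  rewrite big_nat_recr //= hn1.
  lia.
have [n0 hn0] := IH _ hP'.
exists (n0 + n1.+1)%N => n hn.
have := hn0 (n - n1.+1)%N; rewrite subnK; last by lia.
by apply; lia.
Qed.
Section Proof.
Variables (R : realType) (N : nat) (E : rel 'I_N)
  (qmin qmax : R) (alpha gamma : nat -> R)
  (a : nat -> 'I_N -> 'I_N -> R) (x y : nat -> 'I_N -> R).
Hypothesis Ha0 : forall i j, a 0%N i j = (if E j i then 1 else 0).
Hypothesis Hgam : forall (n k : nat), ((2 ^ n).-1 <= k <= (2 ^ n.+1).-2)%N ->
      gamma k = ((2 : R) ^+ n)^-1.
Hypothesis Ha : forall k i j, E j i ->
      a k.+1 i j = a k i j + (if nflag E (a k) (gamma k) j then gamma k else 0).

Definition tl (m : nat) := trunc_log 2 m.+1.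

Lemma tl_bounds m : (2 ^ tl m <= m.+1 < 2 ^ (tl m).+1)%N.
Proof.
by rewrite /tl trunc_logP // trunc_log_ltn.
Qed.

Lemma gammaE m : gamma m = ((2 : R) ^+ tl m)^-1.
Proof.
apply: Hgam; have := tl_bounds m; move: (tl m) => n /andP[h1 h2].
have h3 : (0 < 2 ^ n)%N by rewrite expn_gt0.
rewrite expnS in h2 *. apply/andP; split; lia.
Qed.

Lemma gamma_gt0 m : 0 < gamma m.
Proof. by rewrite gammaE invr_gt0 exprn_gt0. Qed.

Lemma gamma_le1 m : gamma m <= 1.
Proof. by rewrite gammaE invf_le1 ?exprn_gt0 // exprn_ege1 // ler1n. Qed.

Definition f k j := nflag E (a k) (gamma k) j.
Definition b k i := imbalance E (a k) i.
Definition d i : nat := outdeg E i.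
Definition g k j := \sum_(m < k) (if f m j then gamma m else 0).

Lemma g_ge0 k j : 0 <= g k j.
Proof. by apply: sumr_ge0 => m _; case: ifP => // _; apply/ltW/gamma_gt0. Qed.

Lemma gS k j : g k.+1 j = g k j + (if f k j then gamma k else 0).
Proof. by rewrite /g big_ord_recr. Qed.

Lemma aE k i j : E j i -> a k i j = 1 + g k j.
Proof.
move=> Eji; elim: k => [|k IH]; first by rewrite Ha0 Eji /g big_ord0 addr0.
by rewrite Ha // IH gS addrA.
Qed.

Lemma sum_out_const i (c : R) : \sum_(l | E i l) c = (d i)%:R * c.
Proof.
rewrite -(@eq_bigl _ _ _ _ _ (fun l => l \in [pred j | E i j])) //.
by rewrite sumr_const /d /outdeg mulr_natl.
Qed.

Lemma bE k i : b k i = \sum_(l | E l i) (1 + g k l) - (d i)%:R * (1 + g k i).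
Proof.
rewrite /b /imbalance -sum_out_const; congr (_ - _); apply: eq_bigr => l Hl;
by rewrite aE.
Qed.

Lemma sum_b k : \sum_i b k i = 0.
Proof.
rewrite /b /imbalance sumrB; apply/eqP; rewrite subr_eq0; apply/eqP.
rewrite (eq_bigr (fun i => \sum_j (if E j i then a k i j else 0))); last first.
  by move=> i _; rewrite big_mkcond.
rewrite exchange_big /=; apply: eq_bigr => i _; by rewrite [RHS]big_mkcond.
Qed.

Lemma d_ge0 i : (0 : R) <= (d i)%:R.
Proof. by rewrite ler0n. Qed.

Lemma bS k i : b k.+1 i = b k i + (\sum_(l | E l i) (if f k l then gamma k else 0))
   - (d i)%:R * (if f k i then gamma k else 0).
Proof.
rewrite !bE (eq_bigr (fun l => (1 + g k l) + (if f k l then gamma k else 0))).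
  by rewrite big_split /= gS; ring.
by move=> l _; rewrite gS addrA.
Qed.

Lemma f_true k i : f k i -> (d i)%:R * gamma k <= b k i.
Proof. by []. Qed.

Lemma b_step k i : b k.+1 i >= Num.min (b k i) 0.
Proof.
rewrite bS; have hs : 0 <= \sum_(l | E l i) (if f k l then gamma k else 0).
  by apply: sumr_ge0 => l _; case: ifP => // _; apply/ltW/gamma_gt0.
case: ifP => hf.
  have h : (d i)%:R * gamma k <= b k i := hf; rewrite ge_min; apply/orP; right; lra.
rewrite ge_min; apply/orP; left; lra.
Qed.

Lemma b_nonneg k i : 0 <= b k i -> 0 <= b k.+1 i.
Proof. by move=> h; have := b_step k i; rewrite (min_r h). Qed.

Lemma b_nonneg_le k m i : (k <= m)%N -> 0 <= b k i -> 0 <= b m i.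
Proof.
move=> /subnK <-; elim: (m - k)%N => [//|n IH] h.
by rewrite addSn; apply: b_nonneg; apply: IH.
Qed.

Lemma f_neg k i : b k i < 0 -> f k i = false.
Proof.
move=> h; apply/negbTE; rewrite /f /nflag -/(b k i) -ltNge.
apply: (lt_le_trans h); apply: mulr_ge0; [exact: d_ge0|exact/ltW/gamma_gt0].
Qed.

Lemma g_neg k i : b k i < 0 -> g k i = 0.
Proof.
move=> h; rewrite /g big1 // => m _.
have -> : f m i = false.
  apply: f_neg; rewrite ltNge; apply/negP => hm; move: h; rewrite ltNge => /negP; apply.
  exact: (b_nonneg_le _ _ _ (ltnW (ltn_ord m)) hm).
by [].
Qed.

Definition neg (r : R) := if 0 <= r then 0 else - r.
Definition pos (r : R) := if 0 <= r then r else 0.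
Definition Q k := \sum_i neg (b k i).

Lemma neg_ge0 r : 0 <= neg r. Proof. rewrite /neg; case: ifP => h //; lra. Qed.
Lemma pos_ge0 r : 0 <= pos r. Proof. rewrite /pos; case: ifP => h //. Qed.
Lemma posneg r : pos r - neg r = r.
Proof. rewrite /pos /neg; case: ifP => h; lra. Qed.
Lemma le_pos r : r <= pos r. Proof. rewrite /pos; case: ifP => h //; lra. Qed.
Lemma le_neg r : - r <= neg r. Proof. rewrite /neg; case: ifP => h //; lra. Qed.

Lemma Q_ge0 k : 0 <= Q k. Proof. by apply: sumr_ge0 => i _; apply: neg_ge0. Qed.

Lemma Q_pos k : \sum_i pos (b k i) = Q k.
Proof.
apply/eqP; rewrite -subr_eq0 /Q -sumrB.
by rewrite (eq_bigr (fun i => b k i)) ?sum_b // => i _; rewrite posneg.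
Qed.

Lemma neg_step k i : neg (b k.+1 i) <= neg (b k i).
Proof.
have := b_step k i; rewrite /neg ge_min => /orP[h|h];
by case: ifP => h1; case: ifP => h2; lra.
Qed.

Lemma Q_step k : Q k.+1 <= Q k.
Proof. by apply: ler_sum => i _; apply: neg_step. Qed.

Lemma Q_le k m : (k <= m)%N -> Q m <= Q k.
Proof.
move=> /subnK <-; elim: (m - k)%N => [//|n IH].
by rewrite addSn; apply: le_trans (Q_step _) IH.
Qed.

Lemma b_le_Q k i : b k i <= Q k.
Proof.
rewrite -Q_pos; apply: le_trans (le_pos _) _.
by rewrite (bigD1 i) //= lerDl; apply: sumr_ge0 => j _; apply: pos_ge0.
Qed.

Lemma Nb_le_Q k i : - b k i <= Q k.
Proof.
apply: le_trans (le_neg _) _.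
by rewrite /Q (bigD1 i) //= lerDl; apply: sumr_ge0 => j _; apply: neg_ge0.
Qed.

Lemma absb_le k i : `|b k i| <= Q 0%N.
Proof.
apply: le_trans (Q_le _ _ (leq0n k)); rewrite ler_norml b_le_Q andbT.
by rewrite lerNl Nb_le_Q.
Qed.


Hypothesis Hd : forall i, (0 < d i)%N.
Hypothesis Hconn : forall i j, connect E i j.

Lemma Q0_nofire k j : Q k = 0 -> f k j = false.
Proof.
move=> hQ; apply/negbTE; rewrite /f /nflag -/(b k j) -ltNge.
apply: (le_lt_trans (b_le_Q k j)); rewrite hQ.
by apply: mulr_gt0; [rewrite ltr0n; apply: Hd|apply: gamma_gt0].
Qed.

Definition Dm : R := \sum_i (d i)%:R.
Lemma Dm_ge0 : 0 <= Dm. Proof. by apply: sumr_ge0 => i _; apply: d_ge0. Qed.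
Lemma d_le_Dm i : (d i)%:R <= Dm.
Proof. by rewrite /Dm (bigD1 i) //= lerDl; apply: sumr_ge0 => j _; apply: d_ge0. Qed.

Definition c1 := Q 0%N + Dm.
Lemma c1_ge0 : 0 <= c1.
Proof. by rewrite /c1 addr_ge0 ?Q_ge0 ?Dm_ge0. Qed.

Lemma g_edge k j i : E j i -> g k j <= c1 + Dm * g k i.
Proof.
move=> Eji.
have h1 : g k j <= \sum_(l | E l i) (1 + g k l).
  rewrite (bigD1 j) //=; set S := \sum_(l | _ && _) _.
  have : 0 <= S by apply: sumr_ge0 => l _; rewrite addr_ge0 ?ler01 ?g_ge0.
  lra.
have h2 : \sum_(l | E l i) (1 + g k l) = b k i + (d i)%:R * (1 + g k i) by rewrite bE; ring.
have h3 := b_le_Q k i; have h4 := Q_le _ _ (leq0n k); have h5 := d_le_Dm i.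
have h6 := g_ge0 k i; have h7 := d_ge0 i.
have h8 : (d i)%:R * (1 + g k i) <= Dm * (1 + g k i).
  by apply: ler_wpM2r => //; rewrite addr_ge0 ?ler01.
rewrite /c1; nra.
Qed.

Lemma g_path k s : b k s < 0 -> forall p j, path E j p -> last j p = s ->
  g k j <= c1 * (Dm + 1) ^+ size p.
Proof.
move=> hs; elim=> [|z p IH] j /=.
  by move=> _ ->; rewrite g_neg // expr0 mulr1 c1_ge0.
move=> /andP[Ejz hp] hl; have := IH z hp hl => hz.
have := g_edge k _ _ Ejz => he.
have hc := c1_ge0; have hD := Dm_ge0.
have hx : 1 <= (Dm + 1) ^+ size p by rewrite exprn_ege1 // lerDr.
rewrite exprS; nra.
Qed.

Lemma g_conn k s j : b k s < 0 -> g k j <= c1 * (Dm + 1) ^+ N.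
Proof.
move=> hs; have /connectP[p hp hl] := Hconn j s.
case: (shortenP hp) hl => p' hp' hu _ hl.
apply: le_trans (g_path _ _ hs _ _ hp' (esym hl)) _.
apply: ler_wpM2l; first exact: c1_ge0.
apply: ler_weXn2l; first by rewrite lerDr Dm_ge0.
have := card_uniqP hu => /= hc.
have : (#|j :: p'| <= #|'I_N|)%N by apply: max_card.
by rewrite card_ord (card_uniqP hu) /=; lia.
Qed.

Definition Kg := c1 * (Dm + 1) ^+ N + 1.

Lemma g_bound k j : g k j <= Kg.
Proof.
elim: k j => [|k IH] j.
  rewrite /g big_ord0 /Kg; apply: addr_ge0 => //.
  by apply: mulr_ge0; [apply: c1_ge0|apply: exprn_ge0; rewrite addr_ge0 ?Dm_ge0].
have [hQ|hQ] := eqVneq (Q k.+1) 0.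
  have [hQk|hQk] := eqVneq (Q k) 0.
    by rewrite gS Q0_nofire // addr0.
  have [s hs] : exists s, b k s < 0.
    apply/existsP; apply: contraNT hQk => /existsPn hn.
    rewrite /Q big1 // => i _; rewrite /neg; move: (hn i); rewrite -leNgt => ->.
    by [].
  rewrite gS /Kg; apply: lerD; first exact: g_conn _ _ _ hs.
  by case: ifP => _ //; apply: gamma_le1.
have [s hs] : exists s, b k.+1 s < 0.
  apply/existsP; apply: contraNT hQ => /existsPn hn.
  rewrite /Q big1 // => i _; rewrite /neg; move: (hn i); rewrite -leNgt => ->.
  by [].
by apply: le_trans (g_conn _ _ _ hs) _; rewrite lerDl.
Qed.


Definition fires t := [exists j, f t j].

Lemma nofire_Q t : ~~ fires t -> Q t <= Dm * gamma t.
Proof.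
move=> /existsPn hn; rewrite -Q_pos /Dm mulr_suml; apply: ler_sum => j _.
have := hn j; rewrite /f /nflag -/(b t j) -ltNge => h.
rewrite /pos; case: ifP => _; first exact: ltW.
by apply: mulr_ge0; [apply: d_ge0|apply/ltW/gamma_gt0].
Qed.

Lemma fire_le t : gamma t * (fires t)%:R <= \sum_j (if f t j then gamma t else 0).
Proof.
have hs : 0 <= \sum_j (if f t j then gamma t else 0).
  by apply: sumr_ge0 => j _; case: ifP => // _; apply/ltW/gamma_gt0.
case: (boolP (fires t)) => [/existsP[j hj]|_]; last by rewrite mulr0.
rewrite mulr1 (bigD1 j) //= hj lerDl.
by apply: sumr_ge0 => l _; case: ifP => // _; apply/ltW/gamma_gt0.
Qed.

Lemma fire_total k : \sum_(0 <= t < k) gamma t * (fires t)%:R <= N%:R * Kg.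
Proof.
have h1 : \sum_(0 <= t < k) gamma t * (fires t)%:R <= \sum_j g k j.
  rewrite big_mkord /g exchange_big /=; apply: ler_sum => t _; exact: fire_le.
apply: le_trans h1 _.
apply: le_trans (ler_sum _ (fun j _ => g_bound k j)) _; by rewrite sumr_const card_ord mulr_natl.
Qed.

Definition full n := all fires (index_iota (2 ^ n).-1 (2 ^ n.+1).-1).

Lemma blocks_sum (F : nat -> R) M : \sum_(0 <= t < (2 ^ M).-1) F t =
  \sum_(0 <= n < M) \sum_((2 ^ n).-1 <= t < (2 ^ n.+1).-1) F t.
Proof.
elim: M => [|M IH]; first by rewrite expn0 /= !big_geq.
rewrite big_nat_recr //= -IH (big_cat_nat (n := (2 ^ M).-1)) //.
rewrite expnS; have : (0 < 2 ^ M)%N by rewrite expn_gt0. lia.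
Qed.

Lemma block_gamma n t : ((2 ^ n).-1 <= t < (2 ^ n.+1).-1)%N -> gamma t = ((2 : R) ^+ n)^-1.
Proof.
move=> h; apply: Hgam; move: h; rewrite expnS.
have : (0 < 2 ^ n)%N by rewrite expn_gt0. lia.
Qed.

Lemma block_len n : ((2 ^ n.+1).-1 - (2 ^ n).-1 = 2 ^ n)%N.
Proof. rewrite expnS; have : (0 < 2 ^ n)%N by rewrite expn_gt0. lia. Qed.

Lemma full_sum n : full n ->
  \sum_((2 ^ n).-1 <= t < (2 ^ n.+1).-1) gamma t * (fires t)%:R = 1.
Proof.
move=> /allP hf.
rewrite (eq_big_nat _ _ (F2 := fun _ => ((2 : R) ^+ n)^-1)); last first.
  move=> t ht; rewrite hf ?mulr1; first exact: block_gamma _ _ ht.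
  by rewrite mem_index_iota.
rewrite sumr_const_nat block_len -(mulr_natl ((2 : R) ^+ n)^-1) natrX mulfV //.
Qed.

Lemma block_ge0 n :
  0 <= \sum_((2 ^ n).-1 <= t < (2 ^ n.+1).-1) gamma t * (fires t)%:R.
Proof.
by apply: sumr_ge0 => t _; apply: mulr_ge0; [apply/ltW/gamma_gt0|apply: ler0n].
Qed.

Lemma full_count M : (\sum_(0 <= n < M) full n)%:R <= N%:R * Kg.
Proof.
apply: le_trans (fire_total (2 ^ M).-1); rewrite blocks_sum natr_sum.
apply: ler_sum => n _; case: (boolP (full n)) => h.
  by rewrite full_sum.
by apply: block_ge0.
Qed.

Lemma full_eventually : exists n0, forall n, (n0 <= n)%N -> ~~ full n.
Proof.
apply: (@eventually_not _ (Num.Def.archi_bound (N%:R * Kg))) => M.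
have h0 : (0 : R) <= N%:R * Kg.
  apply: le_trans (full_count 0); by rewrite big_geq.
have := archi_boundP h0; have := full_count M => h1 h2.
by rewrite -(ler_nat R); apply: ltW; apply: le_lt_trans h2.
Qed.

Lemma Q_eventually : exists m0, forall m, (m0 <= m)%N -> Q m <= 2 * Dm * gamma m.
Proof.
have [n0 hn0] := full_eventually.
exists (2 ^ n0.+1).-1 => m hm.
have := tl_bounds m; case hn: (tl m) => [|n'] /andP[h1 h2].
  have : (2 ^ 1 <= 2 ^ n0.+1)%N by rewrite leq_pexp2l.
  rewrite expn1 in h2 *; lia.
have hn' : (n0 <= n')%N.
  rewrite leqNgt; apply/negP => hlt.
  have : (2 ^ n'.+2 <= 2 ^ n0.+1)%N by rewrite leq_pexp2l.
  lia.
have /allPn[t ht hft] := hn0 _ hn'.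
move: ht; rewrite mem_index_iota => ht.
apply: (le_trans (Q_le _ _ (_ : (t <= m)%N))).
  move: ht h1; rewrite expnS; lia.
apply: (le_trans (nofire_Q _ hft)).
rewrite (block_gamma _ _ ht) gammaE hn exprS invfM.
have := Dm_ge0; have : 0 < ((2 : R) ^+ n')^-1 by rewrite invr_gt0 exprn_gt0.
move: (((2 : R) ^+ n')^-1) => z hz hD.
have -> : 2 * Dm * (2^-1 * z) = Dm * z by field. by [].
Qed.


Hypothesis Hapos : forall k, 0 < alpha k.
Hypothesis Hamono : forall k, alpha k.+1 <= alpha k.
Hypothesis Hsq : cvgn (series (fun k => alpha k ^+ 2)).

Lemma alpha_le0 k : alpha k <= alpha 0%N.
Proof. elim: k => [//|k IH]; exact: le_trans (Hamono k) IH. Qed.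

Lemma sum_alpha2 : exists S2, forall k, \sum_(0 <= m < k) alpha m ^+ 2 <= S2.
Proof.
exists (limn (series (fun k => alpha k ^+ 2))) => k.
have hh : {homo series (fun k => alpha k ^+ 2) : n m / (n <= m)%N >-> n <= m}.
  move=> n m hnm; rewrite seriesEnat /=.
  rewrite [leRHS](big_cat_nat (n := n)) //= lerDl; apply: sumr_ge0 => l _; exact: sqr_ge0.
have h := nondecreasing_cvgn_le hh Hsq k.
by move: h; rewrite seriesEnat.
Qed.

Lemma geom_sum k : \sum_(0 <= n < k) ((2 : R) ^+ n)^-1 = 2 - 2 * ((2 : R) ^+ k)^-1.
Proof.
elim: k => [|k IH]; first by rewrite big_geq // expr0 invr1; ring.
rewrite big_nat_recr //= IH exprS invfM.
have : (2 : R) ^+ k != 0 by rewrite expf_neq0 // pnatr_eq0.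
move: ((2 : R) ^+ k) => z hz; by field.
Qed.

Lemma sum_gamma2 k : \sum_(0 <= m < k) gamma m ^+ 2 <= 2.
Proof.
have hk : (k <= (2 ^ k).-1)%N by have := ltn_expl k (isT : (1 < 2)%N); lia.
apply: (@le_trans _ _ (\sum_(0 <= m < (2 ^ k).-1) gamma m ^+ 2)).
  rewrite [leRHS](big_cat_nat (n := k)) //= lerDl; apply: sumr_ge0 => l _; exact: sqr_ge0.
rewrite blocks_sum.
rewrite (eq_big_nat _ _ (F2 := fun n => ((2 : R) ^+ n)^-1)); last first.
  move=> n _.
  rewrite (eq_big_nat _ _ (F2 := fun _ => ((2 : R) ^+ n)^-1 ^+ 2)); last first.
    by move=> t ht; rewrite (block_gamma _ _ ht).
  rewrite sumr_const_nat block_len -(mulr_natl (((2 : R) ^+ n)^-1 ^+ 2)) natrX.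
  have : (2 : R) ^+ n != 0 by rewrite expf_neq0 // pnatr_eq0.
  move: ((2 : R) ^+ n) => z hz; field.
  by [].
rewrite geom_sum gerBl; apply: mulr_ge0 => //; rewrite invr_ge0 exprn_ge0 //.
Qed.

Lemma sum_alpha_gamma : exists S, forall k, \sum_(0 <= m < k) alpha m * gamma m <= S.
Proof.
have [S2 hS2] := sum_alpha2.
exists ((S2 + 2) / 2) => k.
have h : \sum_(0 <= m < k) alpha m * gamma m <=
    \sum_(0 <= m < k) (alpha m ^+ 2 + gamma m ^+ 2) / 2.
  apply: ler_sum => m _; have := sqr_ge0 (alpha m - gamma m); nra.
apply: le_trans h _; rewrite -mulr_suml big_split /=.
have := hS2 k; have := sum_gamma2 k; nra.
Qed.

Lemma sum_min (c : R) m0 k : 0 <= c ->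
  \sum_(0 <= m < k) (if (m < m0)%N then c else 0) <= m0%:R * c.
Proof.
move=> hc; suff : \sum_(0 <= m < k) (if (m < m0)%N then c else 0) <= (minn k m0)%:R * c.
  move=> h; apply: le_trans h _; apply: ler_wpM2r => //; rewrite ler_nat geq_minr //.
elim: k => [|k IH]; first by rewrite big_geq // min0n mul0r.
rewrite big_nat_recr //=; case: ifP => h.
  have -> : minn k.+1 m0 = (minn k m0).+1 by rewrite !minnE; lia.
  by rewrite mulrSr mulrDl mul1r lerD2r.
have -> : minn k.+1 m0 = minn k m0 by rewrite !minnE; lia.
by rewrite addr0.
Qed.

Lemma sum_AQ : exists B, forall k, \sum_(0 <= m < k) alpha m * Q m <= B.
Proof.
have [m0 hm0] := Q_eventually.
have [S hS] := sum_alpha_gamma.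
have hc : 0 <= alpha 0%N * Q 0%N by apply: mulr_ge0; [apply/ltW/Hapos|apply: Q_ge0].
exists (m0%:R * (alpha 0%N * Q 0%N) + 2 * Dm * S) => k.
have h : \sum_(0 <= m < k) alpha m * Q m <=
  \sum_(0 <= m < k) ((if (m < m0)%N then alpha 0%N * Q 0%N else 0) + 2 * Dm * (alpha m * gamma m)).
  apply: ler_sum => m _.
  have ha := Hapos m; have hq := Q_ge0 m; have hg := gamma_gt0 m; have hD := Dm_ge0.
  case: ifP => hm.
    have h1 := alpha_le0 m; have h2 := Q_le _ _ (leq0n m).
    have : 0 <= 2 * Dm * (alpha m * gamma m) by apply: mulr_ge0; [nra|nra].
    nra.
  have := hm0 m; rewrite leqNgt hm => /(_ isT) h1; nra.
apply: le_trans h _; rewrite big_split /= -mulr_sumr; apply: lerD.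
  exact: sum_min.
apply: ler_wpM2l; last exact: hS.
by apply: mulr_ge0 => //; apply: Dm_ge0.
Qed.


Hypothesis Hq : qmin < qmax.
Hypothesis Hx : forall k i, x k i = qmin \/ x k i = qmax.
Hypothesis Hxmax : forall k i, x k i = qmax -> 0 < prob_max qmin qmax (y k i).
Hypothesis Hxmin : forall k i, x k i = qmin -> prob_max qmin qmax (y k i) < 1.
Hypothesis Hy : forall k i, y k.+1 i = y k i
      + alpha k * (\sum_(j | E j i) a k i j * (x k j - x k i))
      + alpha k * (imbalance E (a k) i * x k i).

Lemma x_range k i : qmin <= x k i <= qmax.
Proof. by case: (Hx k i) => ->; apply/andP; split => //; apply: ltW. Qed.

Lemma x_hi k i : qmax <= y k i -> x k i = qmax.
Proof.
move=> h; case: (Hx k i) => // hx; have := Hxmin _ _ hx.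
rewrite /prob_max /sat (max_l (le_trans (ltW Hq) h)) (min_r h) divff ?ltxx //.
by rewrite subr_eq0 gt_eqF.
Qed.

Lemma x_lo k i : y k i <= qmin -> x k i = qmin.
Proof.
move=> h; case: (Hx k i) => // hx; have := Hxmax _ _ hx.
rewrite /prob_max /sat (max_r h) (min_l (ltW Hq)) subrr mul0r ltxx //.
Qed.

Lemma a_bounds k i j : E j i -> 0 <= a k i j <= 1 + Kg.
Proof.
move=> Eji; rewrite aE // lerD2l g_bound andbT.
by apply: addr_ge0; [apply: ler01|apply: g_ge0].
Qed.

Lemma absb_Q k i : `|b k i| <= Q k.
Proof. by rewrite ler_norml b_le_Q andbT lerNl Nb_le_Q. Qed.

Definition Mq := `|qmin| + `|qmax|.
Definition J := alpha 0%N * (N%:R * ((1 + Kg) * (qmax - qmin)) + Q 0%N * Mq).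

Lemma x_abs k i : `|x k i| <= Mq.
Proof.
rewrite /Mq; case: (Hx k i) => ->.
  by rewrite lerDl normr_ge0.
by rewrite lerDr normr_ge0.
Qed.

Lemma sum_edge_abs k i :
  `|\sum_(j | E j i) a k i j * (x k j - x k i)| <= N%:R * ((1 + Kg) * (qmax - qmin)).
Proof.
apply: le_trans (ler_norm_sum _ _ _) _.
apply: (@le_trans _ _ (\sum_(j | E j i) ((1 + Kg) * (qmax - qmin)))).
  apply: ler_sum => j Eji; rewrite normrM.
  have /andP[h1 h2] := a_bounds k _ _ Eji.
  have /andP[h3 h4] := x_range k j; have /andP[h5 h6] := x_range k i.
  rewrite (ger0_norm h1); apply: ler_pM => //; rewrite ler_norml; apply/andP; split; lra.
rewrite big_mkcond /=.
apply: (@le_trans _ _ (\sum_(j < N) ((1 + Kg) * (qmax - qmin)))).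
  apply: ler_sum => j _; case: ifP => // _.
  apply: mulr_ge0; last by rewrite subr_ge0 ltW.
  apply: addr_ge0; [apply: ler01|]; rewrite /Kg; apply: addr_ge0 => //.
  by apply: mulr_ge0; [apply: c1_ge0|apply: exprn_ge0; rewrite addr_ge0 ?Dm_ge0].
by rewrite sumr_const card_ord mulr_natl.
Qed.

Lemma jump k i : `|y k.+1 i - y k i| <= J.
Proof.
rewrite Hy -/(b k i); set S := \sum_(j | _) _.
have -> : y k i + alpha k * S + alpha k * (b k i * x k i) - y k i =
  alpha k * (S + b k i * x k i) by ring.
rewrite normrM.
rewrite (gtr0_norm (Hapos k)) /J; apply: ler_pM.
- exact/ltW/Hapos.
- exact: normr_ge0.
- exact: alpha_le0.
apply: le_trans (ler_normD _ _) _; apply: lerD; first exact: sum_edge_abs.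
rewrite normrM; apply: ler_pM => //; last exact: x_abs.
exact: absb_le.
Qed.

Lemma J_ge0 (i : 'I_N) : 0 <= J.
Proof. exact: le_trans (normr_ge0 _) (jump 0%N i). Qed.

Lemma sAQ_ge0 k : 0 <= \sum_(0 <= m < k) alpha m * Q m.
Proof. by apply: sumr_ge0 => m _; apply: mulr_ge0; [apply/ltW/Hapos|apply: Q_ge0]. Qed.

Lemma y_upper i k :
  y k i <= `|y 0%N i| + `|qmax| + J + `|qmax| * \sum_(0 <= m < k) alpha m * Q m.
Proof.
have hJ := J_ge0 i; have hqa := normr_ge0 qmax.
elim: k => [|k IH].
  rewrite big_geq // mulr0 addr0; have := ler_norm (y 0%N i); lra.
rewrite big_nat_recr //=; have hT := sAQ_ge0 k.
set T := \sum_(0 <= m < k) alpha m * Q m in IH hT *.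
have hy0 := normr_ge0 (y 0%N i).
have hak := Hapos k; have hQk := Q_ge0 k.
have hqQ : 0 <= `|qmax| * (alpha k * Q k) by apply: mulr_ge0 => //; nra.
case: (leP qmax (y k i)) => hy.
  have hxi := x_hi k i hy.
  have hS : \sum_(j | E j i) a k i j * (x k j - x k i) <= 0.
    apply: (@le_trans _ _ (\sum_(j | E j i) (0 : R))); last by rewrite big1.
    apply: ler_sum => j Eji; have /andP[h1 _] := a_bounds k _ _ Eji.
    have /andP[_ h2] := x_range k j; rewrite hxi; nra.
  have hb : imbalance E (a k) i * x k i <= `|qmax| * Q k.
    rewrite hxi -/(b k i); have := absb_Q k i; have := ler_norm (b k i * qmax).
    rewrite normrM; nra.
  rewrite Hy; set S := \sum_(j | _) _ in hS *.
  have : alpha k * S <= 0 by nra.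
  have : alpha k * (imbalance E (a k) i * x k i) <= alpha k * (`|qmax| * Q k).
    by apply: ler_wpM2l => //; apply: ltW.
  nra.
have := jump k i; rewrite ler_norml => /andP[_ h2].
have := ler_norm qmax; nra.
Qed.

Lemma y_lower i k :
  - (`|y 0%N i| + `|qmin| + J + `|qmin| * \sum_(0 <= m < k) alpha m * Q m) <= y k i.
Proof.
have hJ := J_ge0 i; have hqa := normr_ge0 qmin.
elim: k => [|k IH].
  rewrite big_geq // mulr0 addr0; have := ler_norm (- y 0%N i); rewrite normrN; lra.
rewrite big_nat_recr //=; have hT := sAQ_ge0 k.
set T := \sum_(0 <= m < k) alpha m * Q m in IH hT *.
have hy0 := normr_ge0 (y 0%N i).
have hak := Hapos k; have hQk := Q_ge0 k.
have hqQ : 0 <= `|qmin| * (alpha k * Q k) by apply: mulr_ge0 => //; nra.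
case: (leP (y k i) qmin) => hy.
  have hxi := x_lo k i hy.
  have hS : 0 <= \sum_(j | E j i) a k i j * (x k j - x k i).
    apply: (@le_trans _ _ (\sum_(j | E j i) (0 : R))); first by rewrite big1.
    apply: ler_sum => j Eji; have /andP[h1 _] := a_bounds k _ _ Eji.
    have /andP[h2 _] := x_range k j; rewrite hxi; nra.
  have hb : - (`|qmin| * Q k) <= imbalance E (a k) i * x k i.
    rewrite hxi -/(b k i); have := absb_Q k i; have := ler_norm (- (b k i * qmin)).
    rewrite normrN normrM; nra.
  rewrite Hy; set S := \sum_(j | _) _ in hS *.
  have : 0 <= alpha k * S by nra.
  have : alpha k * (- (`|qmin| * Q k)) <= alpha k * (imbalance E (a k) i * x k i).
    by apply: ler_wpM2l => //; apply: ltW.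
  nra.
have := jump k i; rewrite ler_norml => /andP[h1 _].
have := ler_norm (- qmin); rewrite normrN; nra.
Qed.

Lemma y_bounded i : exists ymin ymax : R, forall k, ymin <= y k i <= ymax.
Proof.
have [B hB] := sum_AQ.
exists (- (`|y 0%N i| + `|qmin| + J + `|qmin| * B)).
exists (`|y 0%N i| + `|qmax| + J + `|qmax| * B) => k.
apply/andP; split.
  apply: le_trans (y_lower i k); rewrite lerN2 lerD2l.
  by apply: ler_wpM2l => //; apply: normr_ge0.
apply: le_trans (y_upper i k) _; rewrite lerD2l.
by apply: ler_wpM2l => //; apply: normr_ge0.
Qed.

End Proof.

Theorem lemma10 (R : realType) (N : nat) (E : rel 'I_N)
  (qmin qmax : R) (alpha gamma : nat -> R)
  (a : nat -> 'I_N -> 'I_N -> R) (x y : nat -> 'I_N -> R) :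
  (* graph: no self-loops, strongly connected *)
  (forall i, ~~ E i i) ->
  (forall i j, connect E i j) ->
  (* range condition *)
  qmin < qmax ->
  qmin <= (\sum_i y 0%N i) / N%:R <= qmax ->
  (* initial weights *)
  (forall i j, a 0%N i j = (if E j i then 1 else 0)) ->
  (* gamma(k) = 2^-n for 2^n - 1 <= k <= 2^(n+1) - 2 *)
  (forall (n k : nat), ((2 ^ n).-1 <= k <= (2 ^ n.+1).-2)%N ->
      gamma k = ((2 : R) ^+ n)^-1) ->
  (* step sizes *)
  (forall k, 0 < alpha k) ->
  (forall k, alpha k.+1 <= alpha k) ->
  series alpha @ \oo --> +oo ->
  cvgn (series (fun k => alpha k ^+ 2)) ->
  (* quantized random choice: x_i(k) in {qmin, qmax}, each value taken
     with positive probability p_i(k) resp. 1 - p_i(k) (sample path in the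
     support of the process) *)
  (forall k i, x k i = qmin \/ x k i = qmax) ->
  (forall k i, x k i = qmax -> 0 < prob_max qmin qmax (y k i)) ->
  (forall k i, x k i = qmin -> prob_max qmin qmax (y k i) < 1) ->
  (* weight update on the edges (j,i) *)
  (forall k i j, E j i ->
      a k.+1 i j = a k i j + (if nflag E (a k) (gamma k) j then gamma k else 0)) ->
  (* value update *)
  (forall k i, y k.+1 i = y k i
      + alpha k * (\sum_(j | E j i) a k i j * (x k j - x k i))
      + alpha k * (imbalance E (a k) i * x k i)) ->
  forall i, exists ymin ymax : R, forall k, ymin <= y k i <= ymax.
Proof.
move=> Hloop Hconn Hq _ Ha0 Hgam Hapos Hamono _ Hsq Hx Hxmax Hxmin Ha Hy i.
case: (leqP N 1) => hN.
  have heq : forall j l : 'I_N, j = l.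
    move=> j l; apply: ord_inj; have := ltn_ord j; have := ltn_ord l; lia.
  have hE : forall j l : 'I_N, E j l = false.
    by move=> j l; rewrite (heq j l); apply/negbTE.
  have hc : forall k, y k i = y 0%N i.
    elim=> [//|k IH]; rewrite Hy /imbalance !big_pred0; last 3 first.
    - by move=> j; rewrite hE.
    - by move=> j; rewrite hE.
    - by move=> j; rewrite hE.
    by rewrite subrr mul0r !mulr0 !addr0.
  by exists (y 0%N i), (y 0%N i) => k; rewrite hc lexx.
have Hd : forall j, (0 < #|[pred l | E j l]|)%N.
  move=> j.
  pose l : 'I_N := if nat_of_ord j == 0%N then Ordinal hN else Ordinal (ltn_trans (ltnSn 0) hN).
  have hjl : j != l.
    rewrite /l; case: ifP => h; apply/eqP => /(congr1 (@nat_of_ord N)) /=; move/eqP: h; lia.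
  have /connectP[p hp hlast] := Hconn j l.
  case: p hp hlast => [|z p] /=; first by move=> _ hl; move: hjl; rewrite hl eqxx.
  move=> /andP[Ejz _] _.
  by apply/card_gt0P; exists z.
exact: (@y_bounded R N E qmin qmax alpha gamma a x y Ha0 Hgam Ha Hd Hconn Hapos Hamono Hsq Hq Hx Hxmax Hxmin Hy).
Qed.
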